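(* Let $A\in\mathbb{R}^{m\times n}$, $b\in\mathbb{R}^m$. Let $H=AA^T$, or, if $A$ is (square) symmetric positive semidefinite, $H=A$. Let $\lambda_{\max}$, $\kappa^+$ and $c(H)=1/(\kappa^+\lambda_{\max})$ be as in the context. Given $w_0\in\mathbb{R}^m$, set $x_0=A^Tw_0$, $r_0=b-Ax_0$, and for $k\ge1$ (as long as $Hr_{k-1}\ne0$) set $r_k=F_1(r_{k-1})$ and $$x_k=x_{k-1}+\alpha_{1,1}(r_{k-1})\,r_{k-1}\ \text{ if } H=A,\qquad x_k=x_{k-1}+\alpha_{1,1}(r_{k-1})\,A^Tr_{k-1}\ \text{ if } H=AA^T,$$ where $\alpha_{1,1}(r)=r^THr/r^TH^2r$. Suppose $k\ge1$ and $Hr_j\neq0$ for $j=0,\dots,k-1$. Then: (I) $r_k=b-Ax_k$. (II) If $Ax=b$ is solvable, $\|r_k\|\le\left(\frac{\kappa^+-1}{\kappa^++1}\right)^k\|r_0\|$. (III) If $Ax=b$ is solvable and $\varepsilon\in(0,1)$, then $\|r_k\|\le\varepsilon$ whenever $k\ge\kappa^+\ln(\|r_0\|/\varepsilon)$. (IV) Regardless of solvability, $\|r_k\|^2\le\|r_0\|^2-c(H)\sum_{j=0}^{k-1}r_j^THr_j$. (V) Regardless of solvability, if $\varepsilon\in(0,1)$ and $r_j^THr_j>\varepsilon$ for all $j=0,\dots,k-1$, then $k\le\kappa^+\lambda_{\max}\|r_0\|^2/\varepsilon$. (VI) If $\|r_k\|\le\varepsilon$ then $\|Ax_k-b\|\le\varepsilon$;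 if $r_k^THr_k\le\varepsilon$ then $\|A^TAx_k-A^Tb\|\le\sqrt{\varepsilon}$ when $H=AA^T$, and $\|A^TAx_k-A^Tb\|\le\sqrt{\varepsilon}\,\|A\|^{1/2}$ when $H=A$.
   Context: Norms are Euclidean; $\|A\|$ is the operator 2-norm. $\lambda_{\max}$ is the largest eigenvalue of $H$ and $\kappa^+$ is the ratio of the largest eigenvalue of $H$ to its smallest positive eigenvalue. For $r$ with $Hr\ne0$, $F_1(r)=r-\frac{r^THr}{r^TH^2r}Hr$. *)

(* Defs.v *)
From HB Require Import structures.
From mathcomp Require Import all_boot all_order all_algebra.
From mathcomp Require Import all_classical all_reals all_analysis.
Set Implicit Arguments. Unset Strict Implicit. Unset Printing Implicit Defensive.
Import Order.TTheory GRing.Theory Num.Theory.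
Local Open Scope ring_scope.
Local Open Scope classical_set_scope.

Section Defs.
Variable R : realType.

Definition vnorm (p : nat) (v : 'cV[R]_p) : R :=
  Num.sqrt (\sum_(i < p) (v i 0) ^+ 2).

Definition opnorm (p q : nat) (M : 'M[R]_(p, q)) : R :=
  sup [set vnorm (M *m x) | x in [set x : 'cV[R]_q | vnorm x <= 1]].

Definition bilin (p : nat) (u : 'cV[R]_p) (M : 'M[R]_p) (v : 'cV[R]_p) : R :=
  (u^T *m M *m v) 0 0.

Definition sym_psd (p : nat) (M : 'M[R]_p) : Prop :=
  M^T = M /\ forall v : 'cV[R]_p, 0 <= bilin v M v.

Definition lambda_max (p : nat) (H : 'M[R]_p) : R :=
  sup [set a : R | eigenvalue H a].
Definition lambda_min_pos (p : nat) (H : 'M[R]_p) : R :=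
  inf [set a : R | eigenvalue H a /\ 0 < a].
Definition kappa_plus (p : nat) (H : 'M[R]_p) : R :=
  lambda_max H / lambda_min_pos H.
Definition cH (p : nat) (H : 'M[R]_p) : R :=
  1 / (kappa_plus H * lambda_max H).

Definition alpha11 (p : nat) (H : 'M[R]_p) (r : 'cV[R]_p) : R :=
  bilin r H r / bilin r (H *m H) r.
Definition F1 (p : nat) (H : 'M[R]_p) (r : 'cV[R]_p) : 'cV[R]_p :=
  r - alpha11 H r *: (H *m r).

End Defs.

(* Main.v *)
Require Import Defs.
From HB Require Import structures.
From mathcomp Require Import all_boot all_order all_algebra.
From mathcomp Require Import all_classical all_reals all_analysis.
From mathcomp Require Import complex.
From mathcomp Require Import ring lra.
Import Order.TTheory GRing.Theory Num.Theory.
Set Implicit Arguments. Unset Strict Implicit. Unset Printing Implicit Defensive.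
Local Open Scope ring_scope.
Local Open Scope sesquilinear_scope.

Section Spec.
Variable R : realType.
Let toC : {rmorphism R -> R[i]} := real_complex R.

Lemma toC_real (x : R) : toC x \is Num.real.
Proof. by rewrite /toC /= complex_real. Qed.

Lemma conj_toC (x : R) : (toC x)^* = toC x.
Proof. exact/CrealP/toC_real. Qed.

Lemma spec_decomp n (G : 'M[R]_n) : G^T = G ->
  exists d : 'I_n -> R, (forall i, eigenvalue G (d i)) /\
   forall u : 'cV[R]_n, exists w : 'I_n -> R, (forall i, 0 <= w i) /\
     forall j, (u^T *m G ^+ j *m u) 0 0 = \sum_i w i * d i ^+ j.
Proof.
move=> Gsym.
set Gc := map_mx toC G.
have herm : Gc \is hermsymmx.
  apply/is_hermitianmxP; rewrite expr0 scale1r.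
  apply/matrixP => i j; rewrite !mxE.
  by rewrite conj_toC -{1}Gsym mxE.
have /orthomx_spectralP Gdec := hermitian_normalmx herm.
set P := spectralmx Gc in Gdec.
set D := spectral_diag Gc in Gdec.
have Pu : P \is unitarymx := spectral_unitarymx Gc.
have Dreal : forall i, D 0 i \is Num.real.
  by move=> i; apply: (mxOverP (hermitian_spectral_diag_real herm)).
rewrite invmx_unitary // in Gdec.
have PPt : P *m P^t* = 1%:M by apply/unitarymxP.
have PtP : P^t* *m P = 1%:M.
  by rewrite -invmx_unitary // mulVmx // unitarymx_unit.
have PG : P *m Gc = diag_mx D *m P.
  by rewrite Gdec !mulmxA PPt mul1mx.
exists (fun i => complex.Re (D 0 i)); split.
  move=> i; rewrite -(eigenvalue_map toC) -/Gc.
  have -> : toC (complex.Re (D 0 i)) = D 0 i by rewrite /toC /= RRe_real.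
  apply/eigenvalueP; exists (row i P).
    by rewrite -row_mul PG mul_diag_mx; apply/rowP => j; rewrite !mxE.
  apply/negP => /eqP Pi0.
  have := congr1 (row i) PPt; rewrite row_mul Pi0 mul0mx => /rowP /(_ i).
  by rewrite !mxE eqxx /= => /eqP; rewrite eq_sym oner_eq0.
have Dpow : forall j, Gc ^+ j = P^t* *m diag_mx (\row_i (D 0 i ^+ j)) *m P.
  elim=> [|j IH].
    rewrite expr0.
    have -> : diag_mx (\row_i (D 0 i ^+ 0)) = 1%:M.
      by apply/matrixP => a b; rewrite !mxE expr0.
    by rewrite mulmx1 PtP.
  rewrite exprSr IH -mulmxE Gdec.
  rewrite -!mulmxA; congr (_ *m _); rewrite (mulmxA P) PPt mul1mx.
  by rewrite mulmxA mulmx_diag; congr (diag_mx _ *m _); apply/rowP => a; rewrite !mxE exprSr.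
have Gpow : forall j, (G ^+ j) ^ toC = Gc ^+ j.
  elim=> [|j IH]; first by rewrite !expr0 map_mx1.
  by rewrite !exprSr -!mulmxE map_mxM IH.
move=> u.
set y := (map_mx toC u)^T *m P^t*.
exists (fun i => complex.Re (y 0 i) ^+ 2 + complex.Im (y 0 i) ^+ 2); split.
  by move=> i; rewrite addr_ge0 // sqr_ge0.
move=> j; apply: (fmorph_inj toC).
have -> : toC ((u^T *m G ^+ j *m u) 0 0) = (map_mx toC (u^T *m G ^+ j *m u)) 0 0.
  by rewrite [RHS]mxE.
rewrite !map_mxM -map_trmx Gpow Dpow !mulmxA -/y.
rewrite -(mulmxA _ P) mxE rmorph_sum /=; apply: eq_bigr => i _.
rewrite mul_mx_diag [X in X * _]mxE [X in _ * X * _]mxE.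
have -> : (P *m map_mx toC u) i 0 = (y 0 i)^*.
  rewrite /y !mxE rmorph_sum; apply: eq_bigr => k _.
  by rewrite !mxE rmorphM /= conjCK conj_toC mulrC.
rewrite -mulrA (mulrC (D 0 i ^+ j)) mulrA -normCK rmorphM rmorphXn /=.
congr (_ * _); last by rewrite /toC /= RRe_real.
by rewrite /toC /= add_Re2_Im2.
Qed.

End Spec.
Local Close Scope sesquilinear_scope.

Section Basic.
Variable R : realType.

Definition nsq p (v : 'cV[R]_p) : R := (v^T *m v) 0 0.

Lemma nsqE p (v : 'cV[R]_p) : nsq v = \sum_i v i 0 ^+ 2.
Proof. by rewrite /nsq mxE; apply: eq_bigr => i _; rewrite mxE expr2. Qed.

Lemma nsq_ge0 p (v : 'cV[R]_p) : 0 <= nsq v.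
Proof. by rewrite nsqE sumr_ge0 // => i _; rewrite sqr_ge0. Qed.

Lemma vnorm_sq p (v : 'cV[R]_p) : vnorm v ^+ 2 = nsq v.
Proof. by rewrite /vnorm sqr_sqrtr -?nsqE // nsq_ge0. Qed.

Lemma vnormE p (v : 'cV[R]_p) : vnorm v = Num.sqrt (nsq v).
Proof. by rewrite /vnorm nsqE. Qed.

Lemma vnorm_ge0 p (v : 'cV[R]_p) : 0 <= vnorm v.
Proof. exact: sqrtr_ge0. Qed.

Lemma nsq_eq0 p (v : 'cV[R]_p) : nsq v = 0 -> v = 0.
Proof.
rewrite nsqE => /eqP; rewrite psumr_eq0 => [/allP H|i _]; last by rewrite sqr_ge0.
apply/matrixP => i j; rewrite ord1 mxE; apply/eqP; rewrite -sqrf_eq0.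
by apply: (implyP (H i _)); rewrite ?mem_index_enum.
Qed.

Lemma dotC p (u v : 'cV[R]_p) : (u^T *m v) 0 0 = (v^T *m u) 0 0.
Proof. by rewrite -[in RHS](trmxK u) -trmx_mul [RHS]mxE. Qed.

Lemma nsqZ p (c : R) (v : 'cV[R]_p) : nsq (c *: v) = c ^+ 2 * nsq v.
Proof.
rewrite /nsq; have -> : (c *: v)^T = c *: v^T by apply/matrixP => i j; rewrite !mxE.
by rewrite -scalemxAl -scalemxAr !mxE mulrA expr2.
Qed.

Lemma vnormZ p (c : R) (v : 'cV[R]_p) : vnorm (c *: v) = `|c| * vnorm v.
Proof. by rewrite !vnormE nsqZ sqrtrM ?sqr_ge0 // sqrtr_sqr. Qed.

Lemma vnormN p (v : 'cV[R]_p) : vnorm (- v) = vnorm v.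
Proof. by rewrite -scaleN1r vnormZ normrN1 mul1r. Qed.

Lemma nsqB p (c : R) (u v : 'cV[R]_p) :
  nsq (u - c *: v) = nsq u - 2 * c * (u^T *m v) 0 0 + c ^+ 2 * nsq v.
Proof.
rewrite /nsq; have -> : (u - c *: v)^T = u^T - c *: v^T by apply/matrixP => i j; rewrite !mxE.
rewrite mulmxBl mulmxBr mulmxBr -!scalemxAl -!scalemxAr.
rewrite !mxE.
rewrite [\sum_j v^T 0 j * u j 0](eq_bigr (fun j => u^T 0 j * v j 0)); last first.
  by move=> j _; rewrite !mxE mulrC.
ring.
Qed.

End Basic.

Section Facts.
Variable R : realType.

Lemma trZ p q (c : R) (M : 'M[R]_(p, q)) : (c *: M)^T = c *: M^T.
Proof. by apply/matrixP => i j; rewrite !mxE. Qed.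

Lemma bilin_dot p (H : 'M[R]_p) (u v : 'cV[R]_p) :
  bilin u H v = (u^T *m (H *m v)) 0 0.
Proof. by rewrite /bilin mulmxA. Qed.

Lemma bilin_HH p (H : 'M[R]_p) (r : 'cV[R]_p) : H^T = H ->
  bilin r (H *m H) r = nsq (H *m r).
Proof. by move=> Hs; rewrite /bilin /nsq trmx_mul Hs !mulmxA. Qed.

Lemma nsq_gt0 p (v : 'cV[R]_p) : v != 0 -> 0 < nsq v.
Proof.
move=> v0; rewrite lt_neqAle nsq_ge0 andbT eq_sym; apply/eqP => /nsq_eq0 v0'.
by rewrite v0' eqxx in v0.
Qed.

Lemma F1_nsq p (H : 'M[R]_p) (r : 'cV[R]_p) : H^T = H -> H *m r != 0 ->
  nsq (F1 H r) = nsq r - bilin r H r ^+ 2 / bilin r (H *m H) r.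
Proof.
move=> Hs Hr0; have a2 := nsq_gt0 Hr0.
rewrite /F1 nsqB /alpha11 bilin_HH // -bilin_dot.
field; exact: lt0r_neq0.
Qed.

Lemma a2_gt0 p (H : 'M[R]_p) (r : 'cV[R]_p) : H^T = H -> H *m r != 0 ->
  0 < bilin r (H *m H) r.
Proof. by move=> Hs Hr0; rewrite bilin_HH // nsq_gt0. Qed.

Lemma eig_col p (H : 'M[R]_p) e : H^T = H -> eigenvalue H e ->
  exists x : 'cV[R]_p, x != 0 /\ H *m x = e *: x.
Proof.
move=> Hs /eigenvalueP [v vH v0]; exists v^T; split.
  by apply/negP => /eqP/(congr1 trmx); rewrite trmxK trmx0 => /eqP; apply/negP.
by rewrite -{1}Hs -trmx_mul vH trZ.
Qed.

Lemma eig_pow p (H : 'M[R]_p) e (x : 'cV[R]_p) : H *m x = e *: x ->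
  forall j, H ^+ j *m x = e ^+ j *: x.
Proof.
move=> Hx; elim=> [|j IH]; first by rewrite !expr0 mul1mx scale1r.
by rewrite exprSr -mulmxE -mulmxA Hx -scalemxAr IH scalerA -exprS.
Qed.

Lemma eig_ge0 p (H : 'M[R]_p) e : H^T = H -> (forall v, 0 <= bilin v H v) ->
  eigenvalue H e -> 0 <= e.
Proof.
move=> Hs Hpsd /(eig_col Hs) [x [x0 Hx]].
have := Hpsd x; rewrite bilin_dot Hx -scalemxAr mxE -/(nsq x).
by rewrite pmulr_lge0 // nsq_gt0.
Qed.

Lemma sum_expand (I : finType) (w d : I -> R) (e : R) :
  \sum_i w i * (d i - e) ^+ 2 =
  \sum_i w i * d i ^+ 2 - 2 * e * \sum_i w i * d i ^+ 1 + e ^+ 2 * \sum_i w i * d i ^+ 0.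
Proof.
rewrite !mulr_sumr -sumrB -big_split /=; apply: eq_bigr => i _; ring.
Qed.

End Facts.

Section Facts2.
Variable R : realType.

Lemma quad_pow p (H : 'M[R]_p) (v : 'cV[R]_p) :
  bilin v H v = (v^T *m H ^+ 1 *m v) 0 0 /\
  bilin v (H *m H) v = (v^T *m H ^+ 2 *m v) 0 0 /\
  nsq v = (v^T *m H ^+ 0 *m v) 0 0.
Proof. by rewrite expr1 expr2 expr0 mulmx1 /bilin mulmxE. Qed.

Lemma spec_facts p (H : 'M[R]_p) (r0 : 'cV[R]_p) : H^T = H ->
  (forall v, 0 <= bilin v H v) -> H *m r0 != 0 ->
  [/\ 0 < lambda_min_pos H, lambda_min_pos H <= lambda_max H,
      (forall e, eigenvalue H e -> 0 <= e <= lambda_max H),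
      (forall e, eigenvalue H e -> 0 < e -> lambda_min_pos H <= e) &
      (forall v, bilin v (H *m H) v <= lambda_max H * bilin v H v)].
Proof.
move=> Hs Hpsd Hr0.
have [d [deig dec]] := spec_decomp Hs.
have dge0 : forall i, 0 <= d i by move=> i; exact: (eig_ge0 Hs Hpsd (deig i)).
have eig_d : forall e, eigenvalue H e -> exists i, d i = e.
  move=> e /(eig_col Hs) [x [x0 Hx]].
  have [w [w0 wdec]] := dec x.
  have aj : forall j, \sum_i w i * d i ^+ j = e ^+ j * nsq x.
    by move=> j; rewrite -wdec -mulmxA (eig_pow Hx) -scalemxAr mxE.
  have S0 : \sum_i w i * (d i - e) ^+ 2 = 0.
    rewrite sum_expand !aj expr0 expr1 mul1r; ring.
  have T0 := psumr_eq0P (fun i _ => mulr_ge0 (w0 i) (sqr_ge0 (d i - e))) S0.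
  case: (pselect (exists i, w i != 0)) => [[i wi]|].
    exists i; have := T0 i isT; move/eqP; rewrite mulf_eq0 (negbTE wi) /=.
    by rewrite sqrf_eq0 subr_eq0 => /eqP.
  move=> nw; exfalso.
  have : nsq x = 0.
    rewrite -[nsq x]mul1r -(expr0 e) -aj big1 // => i _.
    case: (pselect (w i = 0)) => [->|wi]; first by rewrite mul0r.
    by exfalso; apply: nw; exists i; apply/eqP.
  by move/nsq_eq0 => x0'; rewrite x0' eqxx in x0.
have [i0 di0] : exists i, 0 < d i.
  have [w [w0 wdec]] := dec r0.
  have := a2_gt0 Hs Hr0; rewrite (proj1 (proj2 (quad_pow H r0))) wdec.
  move=> S; case: (pselect (exists i, 0 < d i)) => // nd; exfalso.
  suff : \sum_i w i * d i ^+ 2 = 0 by move=> S'; rewrite S' ltxx in S.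
  apply: big1 => i _.
  have : d i = 0.
    apply/eqP; rewrite eq_le dge0 andbT leNgt; apply/negP => di; apply: nd.
    by exists i.
  by move=> ->; rewrite expr0n mulr0.
set E := [set a : R | eigenvalue H a]%classic.
set P := [set a : R | eigenvalue H a /\ 0 < a]%classic.
have Eub : has_ubound E.
  exists (\sum_i `|d i|) => e /eig_d [i <-].
  rewrite (bigD1 i) //=; apply: (le_trans (ler_norm _)).
  by rewrite lerDl sumr_ge0.
have EL : forall e, E e -> e <= lambda_max H.
  by move=> e Ee; exact: (ub_le_sup Eub).
have Plb : has_lbound P by exists 0 => e [_ /ltW].
have PL : forall e, P e -> lambda_min_pos H <= e.
  by move=> e Pe; exact: (ge_inf Plb).
set m0 := \big[Order.min/d i0]_(i | 0 < d i) d i.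
have m0pos : 0 < m0.
  by apply: (big_ind (fun x => 0 < x)) => // x y x0 y0; rewrite lt_min x0 y0.
have m0le : forall i, 0 < d i -> m0 <= d i.
  by move=> i di; rewrite /m0 (bigD1 i) //= ge_min lexx.
have mupos : 0 < lambda_min_pos H.
  apply: (lt_le_trans m0pos); apply: lb_le_inf.
    by exists (d i0); split.
  by move=> e [/eig_d [i <-] di]; exact: m0le.
split => //.
- apply: (le_trans (PL (d i0) (conj (deig i0) di0))).
  by apply: EL; exact: deig.
- by move=> e ee; rewrite (eig_ge0 Hs Hpsd ee) EL.
- by move=> e ee e0; apply: PL.
- move=> v; have [w [w0 wdec]] := dec v.
  have [q1 [q2 _]] := quad_pow H v.
  rewrite q1 q2 !wdec mulr_sumr; apply: ler_sum => i _.
  have dL : d i <= lambda_max H by apply: EL; exact: deig.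
  have := dge0 i; have := w0 i; move: dL.
  set L := lambda_max H; set a := w i; set b := d i => dL a0 b0.
  have hh : 0 <= a * b * (L - b) by rewrite mulr_ge0 ?subr_ge0 // mulr_ge0.
  rewrite expr1 expr2; nra.
Qed.

End Facts2.

Section Contract.
Variable R : realType.

Lemma contract (I : finType) (w d : I -> R) (mu L : R) :
  0 < mu -> mu <= L -> (forall i, 0 <= w i) ->
  (forall i, w i = 0 \/ (mu <= d i /\ d i <= L)) ->
  0 < \sum_i w i * d i ^+ 2 ->
  \sum_i w i * d i ^+ 0 - (\sum_i w i * d i ^+ 1) ^+ 2 / \sum_i w i * d i ^+ 2
   <= ((L - mu) / (L + mu)) ^+ 2 * \sum_i w i * d i ^+ 0.
Proof.
move=> mu0 muL w0 wd a2pos.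
set a0 := \sum_i w i * d i ^+ 0; set a1 := \sum_i w i * d i ^+ 1.
set a2 := \sum_i w i * d i ^+ 2.
set al := 2 / (L + mu); set q := (L - mu) / (L + mu).
have Lmu : 0 < L + mu by lra.
have step1 : a0 - a1 ^+ 2 / a2 <= a0 - 2 * al * a1 + al ^+ 2 * a2.
  have -> : a0 - 2 * al * a1 + al ^+ 2 * a2 =
            a0 - a1 ^+ 2 / a2 + (al * a2 - a1) ^+ 2 / a2.
    by field; apply: lt0r_neq0.
  by rewrite lerDl divr_ge0 // ?sqr_ge0 // ltW.
have step2 : a0 - 2 * al * a1 + al ^+ 2 * a2 = \sum_i w i * (1 - al * d i) ^+ 2.
  rewrite /a0 /a1 /a2 !mulr_sumr -sumrB -big_split /=; apply: eq_bigr => i _; ring.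
apply: (le_trans step1); rewrite step2 /a0 mulr_sumr; apply: ler_sum => i _.
case: (wd i) => [->|[d1 d2]]; first by rewrite !mul0r mulr0.
suff h : (1 - al * d i) ^+ 2 <= q ^+ 2.
  by rewrite expr0 mulr1 [q ^+ 2 * _]mulrC ler_wpM2l.
have -> : (1 - al * d i) ^+ 2 = q ^+ 2 - 4 * (d i - mu) * (L - d i) / (L + mu) ^+ 2.
  by rewrite /al /q; field; apply: lt0r_neq0.
rewrite gerBl divr_ge0 ?sqr_ge0 // mulr_ge0 ?subr_ge0 //.
by rewrite mulr_ge0 // subr_ge0.
Qed.

End Contract.

Section Iter.
Variable R : realType.

Lemma gen_IV p (H : 'M[R]_p) (r : nat -> 'cV[R]_p) (k : nat) (c : R) :
  (forall j, (j < k)%N -> nsq (r j.+1) <= nsq (r j) - c * bilin (r j) H (r j)) ->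
  nsq (r k) <= nsq (r 0%N) - c * \sum_(j < k) bilin (r j) H (r j).
Proof.
move=> st.
suff : forall j, (j <= k)%N ->
  nsq (r j) <= nsq (r 0%N) - c * \sum_(i < j) bilin (r i) H (r i) by apply.
elim=> [|j IH] jk; first by rewrite big_ord0 mulr0 subr0.
have jk' : (j < k)%N by [].
apply: (le_trans (st j jk')); rewrite big_ord_recr /=.
have := IH (ltnW jk'); lra.
Qed.

Lemma gen_II p (r : nat -> 'cV[R]_p) (k : nat) (q : R) : 0 <= q ->
  (forall j, (j < k)%N -> vnorm (r j.+1) <= q * vnorm (r j)) ->
  vnorm (r k) <= q ^+ k * vnorm (r 0%N).
Proof.
move=> q0 st.
suff : forall j, (j <= k)%N -> vnorm (r j) <= q ^+ j * vnorm (r 0%N) by apply.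
elim=> [|j IH] jk; first by rewrite expr0 mul1r.
apply: (le_trans (st j jk)); rewrite exprS -mulrA ler_wpM2l //.
exact: IH (ltnW jk).
Qed.

Lemma scal_III (kap rho N eps : R) (k : nat) :
  1 <= kap -> 0 <= rho -> 0 < eps ->
  N <= ((kap - 1) / (kap + 1)) ^+ k * rho ->
  kap * ln (rho / eps) <= k%:R -> N <= eps.
Proof.
move=> k1 r0 e0 Nle lnk.
set q := (kap - 1) / (kap + 1) in Nle.
have kp : 0 < kap + 1 by lra.
have q0 : 0 <= q by rewrite /q divr_ge0 //; lra.
have q1 : q <= 1 by rewrite /q ler_pdivrMr //; lra.
have qk1 : q ^+ k <= 1 by apply: exprn_ile1.
case: (lerP rho eps) => [re|er].
  apply: (le_trans Nle); apply: (le_trans _ re).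
  by rewrite ler_piMl.
have kap0 : 0 < kap by lra.
have qexp : q <= expR (- kap^-1).
  apply: le_trans (expR_ge1Dx _).
  rewrite /q ler_pdivrMr //.
  have : kap^-1 * kap = 1 by rewrite mulVf // lt0r_neq0.
  have : kap^-1 <= 1 by rewrite invr_le1 // ?unitfE ?lt0r_neq0.
  have : 0 < kap^-1 by rewrite invr_gt0.
  nra.
have qk : q ^+ k <= expR (- kap^-1) ^+ k.
  by apply: lerXn2r; rewrite // nnegrE ?expR_ge0.
rewrite -expRM_natl in qk.
have rpos : 0 < rho by lra.
have lnpos : 0 < rho / eps by rewrite divr_gt0.
have ex : expR (k%:R * - kap^-1) <= eps / rho.
  have -> : eps / rho = expR (- ln (rho / eps)).
    by rewrite expRN lnK ?posrE // invf_div.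
  rewrite ler_expR mulrN lerN2.
  by rewrite ler_pdivlMr // mulrC.
apply: (le_trans Nle).
have := ler_wpM2r (ltW rpos) (le_trans qk ex).
by rewrite mulfVK // lt0r_neq0.
Qed.

End Iter.

Section Cases.
Variable R : realType.

Lemma kappa_q p (H : 'M[R]_p) : 0 < lambda_min_pos H ->
  lambda_min_pos H <= lambda_max H ->
  (kappa_plus H - 1) / (kappa_plus H + 1) =
  (lambda_max H - lambda_min_pos H) / (lambda_max H + lambda_min_pos H).
Proof.
rewrite /kappa_plus; move: (lambda_max H) (lambda_min_pos H) => L mu m0 mL.
have mu0 : mu != 0 by apply: lt0r_neq0.
have h : L + mu != 0 by apply: lt0r_neq0; lra.
have h' : L / mu + 1 != 0.
  have -> : L / mu + 1 = (L + mu) / mu by field.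
  by rewrite mulf_neq0 // invr_eq0.
by field; rewrite mu0 h.
Qed.

Lemma contract_gen p (H : 'M[R]_p) (v : 'cV[R]_p) (I : finType) (w d : I -> R) :
  H^T = H -> H *m v != 0 ->
  0 < lambda_min_pos H -> lambda_min_pos H <= lambda_max H ->
  (forall i, 0 <= w i) ->
  (forall i, w i = 0 \/ (lambda_min_pos H <= d i /\ d i <= lambda_max H)) ->
  nsq v = \sum_i w i * d i ^+ 0 ->
  bilin v H v = \sum_i w i * d i ^+ 1 ->
  bilin v (H *m H) v = \sum_i w i * d i ^+ 2 ->
  vnorm (F1 H v) <= (kappa_plus H - 1) / (kappa_plus H + 1) * vnorm v.
Proof.
move=> Hs Hv mu0 muL w0 wd e0 e1 e2.
have a2 := a2_gt0 Hs Hv.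
have := contract mu0 muL w0 wd; rewrite -e0 -e1 -e2 => /(_ (a2)).
rewrite -F1_nsq // -kappa_q //.
set q := (kappa_plus H - 1) / (kappa_plus H + 1) => h.
have q0 : 0 <= q.
  rewrite /q kappa_q // divr_ge0 //; lra.
rewrite !vnormE -(ger0_norm q0) -sqrtr_sqr -sqrtrM ?sqr_ge0 //.
by rewrite ler_sqrt // mulr_ge0 ?sqr_ge0 ?nsq_ge0.
Qed.

Lemma cH_eq p (H : 'M[R]_p) : 0 < lambda_min_pos H -> 0 < lambda_max H ->
  cH H = lambda_min_pos H / lambda_max H ^+ 2.
Proof.
rewrite /cH /kappa_plus; move: (lambda_max H) (lambda_min_pos H) => L mu m0 L0.
by field; rewrite !lt0r_neq0.
Qed.

Lemma stepIV p (H : 'M[R]_p) (r0 v : 'cV[R]_p) : H^T = H ->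
  (forall u, 0 <= bilin u H u) -> H *m r0 != 0 -> H *m v != 0 ->
  nsq (F1 H v) <= nsq v - cH H * bilin v H v.
Proof.
move=> Hs Hpsd Hr0 Hv.
have [mu0 muL _ _ quadL] := spec_facts Hs Hpsd Hr0.
rewrite F1_nsq // lerD2l lerN2.
have a2 := a2_gt0 Hs Hv; have qL := quadL v; have a1 := Hpsd v.
set L := lambda_max H in qL muL *; set mu := lambda_min_pos H in mu0 muL *.
set x1 := bilin v H v in qL a1 *; set x2 := bilin v (H *m H) v in a2 qL *.
have L0 : 0 < L by lra.
have -> : cH H = mu / L ^+ 2.
  by rewrite /L /mu cH_eq.
rewrite ler_pdivlMr //.
have c0 : 0 <= mu / L ^+ 2 by apply: divr_ge0; [exact: ltW | exact: sqr_ge0].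
have h1 : mu / L ^+ 2 * x1 * x2 <= mu / L ^+ 2 * x1 * (L * x1).
  by rewrite ler_wpM2l // mulr_ge0.
have h2 : mu / L ^+ 2 * L = mu / L by field; rewrite lt0r_neq0.
have h3 : mu / L <= 1 by rewrite ler_pdivrMr // mul1r.
have h4 : mu / L ^+ 2 * x1 * (L * x1) = mu / L * x1 ^+ 2.
  by field; rewrite lt0r_neq0.
apply: (le_trans h1); rewrite h4.
by rewrite ler_piMl // sqr_ge0.
Qed.

End Cases.

Section Cases2.
Variable R : realType.

Lemma AAt_sym m n (A : 'M[R]_(m, n)) : (A *m A^T)^T = A *m A^T.
Proof. by rewrite trmx_mul trmxK. Qed.

Lemma AAt_bilin m n (A : 'M[R]_(m, n)) u : bilin u (A *m A^T) u = nsq (A^T *m u).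
Proof. by rewrite /bilin /nsq trmx_mul trmxK !mulmxA. Qed.

Lemma AAt_psd m n (A : 'M[R]_(m, n)) u : 0 <= bilin u (A *m A^T) u.
Proof. by rewrite AAt_bilin nsq_ge0. Qed.

Lemma eigG_H m n (A : 'M[R]_(m, n)) e :
  eigenvalue (A^T *m A) e -> e != 0 -> eigenvalue (A *m A^T) e.
Proof.
move=> /eigenvalueP [v vG v0] e0; apply/eigenvalueP; exists (v *m A^T).
  by rewrite mulmxA -(mulmxA v) vG -scalemxAl.
apply/negP => /eqP vA; move: vG; rewrite mulmxA vA mul0mx => /esym/eqP.
by rewrite scaler_eq0 (negbTE e0) (negbTE v0).
Qed.

Lemma case1_contract m n (A : 'M[R]_(m, n)) (r0 : 'cV[R]_m) (s : 'cV[R]_n) :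
  (A *m A^T) *m r0 != 0 -> (A *m A^T) *m (A *m s) != 0 ->
  vnorm (F1 (A *m A^T) (A *m s)) <=
    (kappa_plus (A *m A^T) - 1) / (kappa_plus (A *m A^T) + 1) * vnorm (A *m s).
Proof.
set H := A *m A^T => Hr0 Hv.
have Hs : H^T = H := AAt_sym A.
have [mu0 muL eigb eigmu _] := spec_facts Hs (@AAt_psd m n A) Hr0.
set G := A^T *m A.
have Gs : G^T = G by rewrite /G trmx_mul trmxK.
have Gpsd : forall u, 0 <= bilin u G u.
  by move=> u; have := AAt_psd A^T u; rewrite trmxK.
have [d [deig dec]] := spec_decomp Gs.
have [w [w0 wdec]] := dec s.
have dge0 : forall i, 0 <= d i by move=> i; exact: (eig_ge0 Gs Gpsd (deig i)).
have G1 : (s^T *m G ^+ 1 *m s) 0 0 = nsq (A *m s).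
  by rewrite expr1 /nsq /G trmx_mul !mulmxA.
have G2 : (s^T *m G ^+ 2 *m s) 0 0 = bilin (A *m s) H (A *m s).
  by rewrite expr2 -mulmxE /bilin /G /H trmx_mul !mulmxA.
have G3 : (s^T *m G ^+ 3 *m s) 0 0 = bilin (A *m s) (H *m H) (A *m s).
  by rewrite !exprS expr0 mulr1 -!mulmxE /bilin /G /H trmx_mul !mulmxA.
apply: (@contract_gen _ _ H (A *m s) _ (fun i => w i * d i) d) => //.
- by move=> i; rewrite mulr_ge0.
- move=> i; case: (eqVneq (d i) 0) => [->|di]; first by left; rewrite mulr0.
  right; have dpos : 0 < d i by rewrite lt_neqAle eq_sym di dge0.
  have eH : eigenvalue H (d i) by apply: eigG_H.
  split; first exact: eigmu.
  by case/andP: (eigb _ eH).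
- by rewrite -G1 wdec; apply: eq_bigr => i _; rewrite expr0 mulr1 expr1.
- by rewrite -G2 wdec; apply: eq_bigr => i _; rewrite expr1 -mulrA -expr2.
- by rewrite -G3 wdec; apply: eq_bigr => i _; rewrite -mulrA -exprS.
Qed.

Lemma case2_contract n (A : 'M[R]_n) (r0 : 'cV[R]_n) (s : 'cV[R]_n) :
  sym_psd A -> A *m r0 != 0 -> A *m (A *m s) != 0 ->
  vnorm (F1 A (A *m s)) <=
    (kappa_plus A - 1) / (kappa_plus A + 1) * vnorm (A *m s).
Proof.
move=> [As Apsd] Hr0 Hv.
have [mu0 muL eigb eigmu _] := spec_facts As Apsd Hr0.
have [d [deig dec]] := spec_decomp As.
have [w [w0 wdec]] := dec s.
have dge0 : forall i, 0 <= d i by move=> i; exact: (eig_ge0 As Apsd (deig i)).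
have G2 : (s^T *m A ^+ 2 *m s) 0 0 = nsq (A *m s).
  by rewrite expr2 -mulmxE /nsq trmx_mul As !mulmxA.
have G3 : (s^T *m A ^+ 3 *m s) 0 0 = bilin (A *m s) A (A *m s).
  by rewrite !exprS expr0 mulr1 -!mulmxE /bilin trmx_mul As !mulmxA.
have G4 : (s^T *m A ^+ 4 *m s) 0 0 = bilin (A *m s) (A *m A) (A *m s).
  by rewrite !exprS expr0 mulr1 -!mulmxE /bilin trmx_mul As !mulmxA.
apply: (@contract_gen _ _ A (A *m s) _ (fun i => w i * d i ^+ 2) d) => //.
- by move=> i; rewrite mulr_ge0 ?sqr_ge0.
- move=> i; case: (eqVneq (d i) 0) => [->|di]; first by left; rewrite expr0n mulr0.
  right; have dpos : 0 < d i by rewrite lt_neqAle eq_sym di dge0.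
  split; first exact: eigmu.
  by case/andP: (eigb _ (deig i)).
- by rewrite -G2 wdec; apply: eq_bigr => i _; rewrite expr0 mulr1.
- by rewrite -G3 wdec; apply: eq_bigr => i _; rewrite -mulrA -exprSr.
- by rewrite -G4 wdec; apply: eq_bigr => i _; rewrite -mulrA -exprD.
Qed.

End Cases2.

Section Opnorm.
Variable R : realType.

Lemma opnorm_hasub p q (M : 'M[R]_(p, q)) :
  has_ubound [set vnorm (M *m x) | x in [set x : 'cV[R]_q | vnorm x <= 1]]%classic.
Proof.
exists (Num.sqrt (\sum_i (\sum_j `|M i j|) ^+ 2)) => _ [x /= x1 <-].
rewrite vnormE ler_sqrt; last by rewrite sumr_ge0 // => i _; rewrite sqr_ge0.
have nx : nsq x <= 1 by rewrite -vnorm_sq -(expr1n _ 2) lerXn2r // ?nnegrE ?vnorm_ge0.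
have xj : forall j, `|x j 0| <= 1.
  move=> j; rewrite -(expr_le1 (n := 2)) ?normr_ge0 // real_normK ?num_real //.
  apply: le_trans nx; rewrite nsqE (bigD1 j) //= lerDl sumr_ge0 // => i _.
  by rewrite sqr_ge0.
rewrite nsqE; apply: ler_sum => i _.
rewrite -real_normK ?num_real //; apply: lerXn2r; rewrite ?nnegrE ?normr_ge0 ?sumr_ge0 //.
rewrite mxE; apply: (le_trans (ler_norm_sum _ _ _)); apply: ler_sum => j _.
by rewrite normrM ler_piMr.
Qed.

Lemma opnorm_ub p q (M : 'M[R]_(p, q)) x : vnorm x <= 1 -> vnorm (M *m x) <= opnorm M.
Proof. by move=> x1; apply: (ub_le_sup (opnorm_hasub M)); exists x. Qed.

Lemma opnorm_ge0 p q (M : 'M[R]_(p, q)) : 0 <= opnorm M.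
Proof.
have := @opnorm_ub _ _ M 0; rewrite mulmx0.
have -> : vnorm (0 : 'cV[R]_q) = 0 by rewrite vnormE /nsq mulmx0 mxE sqrtr0.
have -> : vnorm (0 : 'cV[R]_p) = 0 by rewrite vnormE /nsq mulmx0 mxE sqrtr0.
by apply.
Qed.

Lemma lmax_le_opnorm n (A : 'M[R]_n) : sym_psd A -> lambda_max A <= opnorm A.
Proof.
move=> [As Apsd].
case: (pselect (exists e, eigenvalue A e)) => [[e0 ee0]|ne].
  apply: ge_sup; first by exists e0.
  move=> e ee; have e0' := eig_ge0 As Apsd ee.
  have [x [x0 Ax]] := eig_col As ee.
  have nx : 0 < vnorm x by rewrite vnormE sqrtr_gt0 nsq_gt0.
  set y := (vnorm x)^-1 *: x.
  have ny : vnorm y = 1 by rewrite /y vnormZ ger0_norm ?invr_ge0 ?ltW // mulVf // lt0r_neq0.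
  have y1 : vnorm y <= 1 by rewrite ny.
  have := opnorm_ub A y1.
  by rewrite /y -scalemxAr Ax scalerA mulrC -scalerA vnormZ -/y ny mulr1 ger0_norm.
rewrite /lambda_max; have -> : [set a : R | eigenvalue A a]%classic = set0.
  by apply/seteqP; split => a //= ea; apply: ne; exists a.
by rewrite sup0 opnorm_ge0.
Qed.

End Opnorm.

Section MainGen.
Variable R : realType.

Lemma scal_V k (a : 'I_k -> R) (c n0 nk eps : R) : 0 < c -> 0 < eps -> 0 <= nk ->
  nk <= n0 - c * \sum_(j < k) a j -> (forall j : 'I_k, eps < a j) ->
  k%:R <= c^-1 * n0 / eps.
Proof.
move=> c0 e0 nk0 hn ha.
have S : k%:R * eps <= \sum_(j < k) a j.
  have -> : k%:R * eps = \sum_(j < k) eps by rewrite sumr_const card_ord mulr_natl.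
  by apply: ler_sum => j _; apply: ltW.
have S2 : \sum_(j < k) a j <= c^-1 * n0.
  rewrite -(ler_pM2l c0) mulrA mulfV ?mul1r ?lt0r_neq0 //; lra.
by rewrite ler_pdivlMr //; apply: le_trans S2.
Qed.

Lemma main_gen p (H : 'M[R]_p) (r : nat -> 'cV[R]_p) (k : nat) (Q : 'cV[R]_p -> Prop) :
  H^T = H -> (forall v, 0 <= bilin v H v) ->
  (forall j, (j < k)%N -> r j.+1 = F1 H (r j)) -> (1 <= k)%N ->
  (forall j, (j < k)%N -> H *m r j != 0) ->
  (forall v, Q v -> Q (F1 H v)) ->
  (forall v, Q v -> H *m v != 0 ->
     vnorm (F1 H v) <= (kappa_plus H - 1) / (kappa_plus H + 1) * vnorm v) ->
  [/\ Q (r 0%N) ->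
        vnorm (r k) <= ((kappa_plus H - 1) / (kappa_plus H + 1)) ^+ k * vnorm (r 0%N),
      (forall eps : R, Q (r 0%N) -> 0 < eps < 1 ->
        kappa_plus H * ln (vnorm (r 0%N) / eps) <= k%:R -> vnorm (r k) <= eps),
      vnorm (r k) ^+ 2 <=
        vnorm (r 0%N) ^+ 2 - cH H * \sum_(j < k) bilin (r j) H (r j) &
      (forall eps : R, 0 < eps < 1 ->
        (forall j, (j < k)%N -> eps < bilin (r j) H (r j)) ->
        k%:R <= kappa_plus H * lambda_max H * vnorm (r 0%N) ^+ 2 / eps)].
Proof.
move=> Hs Hpsd rS k1 Hr Qinv Qc.
have Hr00 : H *m r 0%N != 0 by apply: Hr.
have [mu0 muL eigb eigmu quadL] := spec_facts Hs Hpsd Hr00.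
have L0 : 0 < lambda_max H by apply: lt_le_trans muL.
have q0 : 0 <= (kappa_plus H - 1) / (kappa_plus H + 1).
  rewrite kappa_q // divr_ge0 //; lra.
have kap1 : 1 <= kappa_plus H by rewrite /kappa_plus ler_pdivlMr // mul1r.
have II : Q (r 0%N) ->
    vnorm (r k) <= ((kappa_plus H - 1) / (kappa_plus H + 1)) ^+ k * vnorm (r 0%N).
  move=> Q0; apply: gen_II => // j jk.
  have Qj : forall i, (i <= k)%N -> Q (r i).
    elim=> [//|i IH] ik; rewrite rS //; apply: Qinv; exact: IH (ltnW ik).
  by rewrite rS //; apply: Qc; [exact: Qj (ltnW jk) | exact: Hr].
have IV : vnorm (r k) ^+ 2 <=
        vnorm (r 0%N) ^+ 2 - cH H * \sum_(j < k) bilin (r j) H (r j).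
  rewrite !vnorm_sq; apply: gen_IV => j jk; rewrite rS //.
  exact: stepIV Hs Hpsd Hr00 (Hr j jk).
split => //.
- move=> eps Q0 /andP [e0 e1] hk.
  exact: (scal_III kap1 (vnorm_ge0 _) e0 (II Q0) hk).
- move=> eps /andP [e0 e1] he.
  have c0 : 0 < cH H by rewrite cH_eq // divr_gt0 // exprn_gt0.
  have -> : kappa_plus H * lambda_max H = (cH H)^-1 by rewrite /cH div1r invrK.
  apply: (scal_V (a := fun j : 'I_k => bilin (r j) H (r j)) c0 e0 (sqr_ge0 (vnorm (r k))) IV).
  by move=> j; apply: he.
Qed.

End MainGen.

Theorem mainTheorem5 (R : realType) :
  (* Case H = A A^T *)
  (forall (m n : nat) (A : 'M[R]_(m, n)) (b w0 : 'cV[R]_m)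
          (x : nat -> 'cV[R]_n) (r : nat -> 'cV[R]_m) (k : nat),
     let H := A *m A^T in
     x 0%N = A^T *m w0 ->
     r 0%N = b - A *m x 0%N ->
     (forall j, (j < k)%N -> r j.+1 = F1 H (r j)) ->
     (forall j, (j < k)%N -> x j.+1 = x j + alpha11 H (r j) *: (A^T *m r j)) ->
     (1 <= k)%N ->
     (forall j, (j < k)%N -> H *m r j != 0) ->
     [/\ (* (I) *) r k = b - A *m x k,
         (* (II) *) (exists z, A *m z = b) ->
            vnorm (r k) <= ((kappa_plus H - 1) / (kappa_plus H + 1)) ^+ k * vnorm (r 0%N),
         (* (III) *) (forall eps : R, (exists z, A *m z = b) -> 0 < eps < 1 ->
            kappa_plus H * ln (vnorm (r 0%N) / eps) <= k%:R -> vnorm (r k) <= eps),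
         (* (IV) *) vnorm (r k) ^+ 2 <=
            vnorm (r 0%N) ^+ 2 - cH H * \sum_(j < k) bilin (r j) H (r j) &
         (* (V) *) (forall eps : R, 0 < eps < 1 ->
            (forall j, (j < k)%N -> eps < bilin (r j) H (r j)) ->
            k%:R <= kappa_plus H * lambda_max H * vnorm (r 0%N) ^+ 2 / eps)] /\
        ((* (VI) *) forall eps : R,
            (vnorm (r k) <= eps -> vnorm (A *m x k - b) <= eps) /\
            (bilin (r k) H (r k) <= eps ->
               vnorm (A^T *m A *m x k - A^T *m b) <= Num.sqrt eps))) /\
  (* Case H = A, A square symmetric positive semidefinite *)
  (forall (n : nat) (A : 'M[R]_n) (b w0 : 'cV[R]_n)
          (x : nat -> 'cV[R]_n) (r : nat -> 'cV[R]_n) (k : nat),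
     sym_psd A ->
     let H := A in
     x 0%N = A^T *m w0 ->
     r 0%N = b - A *m x 0%N ->
     (forall j, (j < k)%N -> r j.+1 = F1 H (r j)) ->
     (forall j, (j < k)%N -> x j.+1 = x j + alpha11 H (r j) *: r j) ->
     (1 <= k)%N ->
     (forall j, (j < k)%N -> H *m r j != 0) ->
     [/\ (* (I) *) r k = b - A *m x k,
         (* (II) *) (exists z, A *m z = b) ->
            vnorm (r k) <= ((kappa_plus H - 1) / (kappa_plus H + 1)) ^+ k * vnorm (r 0%N),
         (* (III) *) (forall eps : R, (exists z, A *m z = b) -> 0 < eps < 1 ->
            kappa_plus H * ln (vnorm (r 0%N) / eps) <= k%:R -> vnorm (r k) <= eps),
         (* (IV) *) vnorm (r k) ^+ 2 <=
            vnorm (r 0%N) ^+ 2 - cH H * \sum_(j < k) bilin (r j) H (r j) &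
         (* (V) *) (forall eps : R, 0 < eps < 1 ->
            (forall j, (j < k)%N -> eps < bilin (r j) H (r j)) ->
            k%:R <= kappa_plus H * lambda_max H * vnorm (r 0%N) ^+ 2 / eps)] /\
        ((* (VI) *) forall eps : R,
            (vnorm (r k) <= eps -> vnorm (A *m x k - b) <= eps) /\
            (bilin (r k) H (r k) <= eps ->
               vnorm (A^T *m A *m x k - A^T *m b) <= Num.sqrt eps * Num.sqrt (opnorm A)))).

Proof.
split.
- move=> m n A b w0 x r k H x0 r0 rS xS k1 Hr.
  have Hs : H^T = H := AAt_sym A.
  have Hpsd : forall v, 0 <= bilin v H v := fun v => AAt_psd A v.
  have Hr00 : H *m r 0%N != 0 by apply: Hr.
  have rI : forall j, (j <= k)%N -> r j = b - A *m x j.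
    elim=> [_|j IH jk]; first by rewrite r0.
    rewrite rS // xS // /F1 mulmxDr opprD addrA -IH ?(ltnW jk) //.
    by rewrite -scalemxAr mulmxA.
  have Qinv : forall v, (exists s, v = A *m s) -> exists s, F1 H v = A *m s.
    move=> v [s sv]; exists (s - alpha11 H v *: (A^T *m (A *m s))).
    by rewrite /F1 sv mulmxBr -scalemxAr !mulmxA.
  have Qc : forall v, (exists s, v = A *m s) -> H *m v != 0 ->
     vnorm (F1 H v) <= (kappa_plus H - 1) / (kappa_plus H + 1) * vnorm v.
    by move=> v [s sv] Hv; rewrite sv; rewrite sv in Hv; exact: case1_contract Hr00 Hv.
  have [II III IV V] := @main_gen R m H r k (fun v => exists s, v = A *m s)
    Hs Hpsd rS k1 Hr Qinv Qc.
  have Q0 : (exists z, A *m z = b) -> exists s, r 0%N = A *m s.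
    by move=> [z zb]; exists (z - x 0%N); rewrite r0 -zb mulmxBr.
  split; first split.
  + by rewrite rI.
  + by move=> hz; apply: II; apply: Q0.
  + by move=> eps hz; apply: III; apply: Q0.
  + exact: IV.
  + exact: V.
  + move=> eps; split.
      have -> : A *m x k - b = - r k by rewrite rI // opprB.
      by rewrite vnormN.
    have -> : A^T *m A *m x k - A^T *m b = - (A^T *m r k).
      by rewrite rI // mulmxBr opprB mulmxA.
    rewrite vnormN vnormE => hb.
    have e0 : 0 <= eps by apply: le_trans hb; apply: Hpsd.
    by rewrite ler_sqrt // -AAt_bilin.
- move=> n A b w0 x r k Apsd H x0 r0 rS xS k1 Hr.
  have [As Apsd'] := Apsd.
  have Hr00 : H *m r 0%N != 0 by apply: Hr.
  have rI : forall j, (j <= k)%N -> r j = b - A *m x j.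
    elim=> [_|j IH jk]; first by rewrite r0.
    rewrite rS // xS // /F1 mulmxDr opprD addrA -IH ?(ltnW jk) //.
    by rewrite -scalemxAr.
  have Qinv : forall v, (exists s, v = A *m s) -> exists s, F1 H v = A *m s.
    move=> v [s sv]; exists (s - alpha11 H v *: (A *m s)).
    by rewrite /F1 sv mulmxBr -scalemxAr.
  have Qc : forall v, (exists s, v = A *m s) -> H *m v != 0 ->
     vnorm (F1 H v) <= (kappa_plus H - 1) / (kappa_plus H + 1) * vnorm v.
    by move=> v [s sv] Hv; rewrite sv; rewrite sv in Hv; exact: case2_contract Apsd Hr00 Hv.
  have [II III IV V] := @main_gen R n H r k (fun v => exists s, v = A *m s)
    As Apsd' rS k1 Hr Qinv Qc.
  have Q0 : (exists z, A *m z = b) -> exists s, r 0%N = A *m s.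
    by move=> [z zb]; exists (z - x 0%N); rewrite r0 -zb mulmxBr.
  split; first split.
  + by rewrite rI.
  + by move=> hz; apply: II; apply: Q0.
  + by move=> eps hz; apply: III; apply: Q0.
  + exact: IV.
  + exact: V.
  + move=> eps; split.
      have -> : A *m x k - b = - r k by rewrite rI // opprB.
      by rewrite vnormN.
    have -> : A^T *m A *m x k - A^T *m b = - (A *m r k).
      by rewrite rI // As mulmxBr opprB mulmxA.
    rewrite vnormN vnormE => hb.
    have e0 : 0 <= eps by apply: le_trans hb; apply: Apsd'.
    have [mu0 muL eigb eigmu quadL] := spec_facts As Apsd' Hr00.
    have hL := quadL (r k); rewrite bilin_HH // in hL.
    have Lop := lmax_le_opnorm Apsd.
    have L0 : 0 <= lambda_max H by apply: ltW; apply: lt_le_trans muL.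
    rewrite -sqrtrM // ler_sqrt ?mulr_ge0 ?opnorm_ge0 //.
    apply: (le_trans hL); rewrite mulrC.
    by apply: ler_pM => //; apply: Apsd'.
Qed.
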